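(* Assume that $\mathfrak{c} = 2^{<\mathfrak{c}}$ and that $\mathfrak{c}$ is a regular cardinal, where $\mathfrak{c}=|\mathbb{R}|$. Then there are $2^{2^{\mathfrak{c}}}$ many pairwise distinct $\sigma$-algebras on $\mathbb{R}$ each of which contains $[\mathbb{R}]^{\leq\omega}$.
   Context: $[\mathbb{R}]^{\leq\omega}$ denotes the family of all countable (finite or countably infinite) subsets of $\mathbb{R}$. $2^{<\mathfrak{c}} = \sup\{2^\lambda : \lambda<\mathfrak{c}\ \text{a cardinal}\}$. *)

(* Defs.v *)
From HB Require Import structures.
From mathcomp Require Import all_boot all_order all_algebra.
From mathcomp Require Import all_classical all_reals all_analysis.
Set Implicit Arguments. Unset Strict Implicit. Unset Printing Implicit Defensive.
Local Open Scope classical_set_scope.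
Local Open Scope card_scope.

(* Cardinals < c are exactly the cardinalities of subsets A of R with A not
   equinumerous to R; 2^|A| is the cardinality of the power set of A. *)
Definition c_eq_two_pow_lt_c (R : realType) : Prop :=
  forall A : set R, ~ (A #= [set: R]) -> [set B : set R | B `<=` A] #<= [set: R].

Definition c_regular (R : realType) : Prop :=
  forall (I : set R) (F : R -> set R),
    ~ (I #= [set: R]) -> (forall i, I i -> ~ (F i #= [set: R])) ->
    ~ ((\bigcup_(i in I) F i) #= [set: R]).

Definition sigma_algebras_with_countables (R : realType) : set (set (set R)) :=
  [set S | sigma_algebra [set: R] S /\ (forall A : set R, countable A -> S A)].
Arguments sigma_algebras_with_countables R : clear implicits.

(* Main.v *)
Require Import Defs.
From HB Require Import structures.
From mathcomp Require Import all_boot all_order all_algebra.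
From mathcomp Require Import all_classical all_reals all_analysis.
Import Order.TTheory GRing.Theory Num.Theory.
Local Open Scope classical_set_scope.
Local Open Scope card_scope.

Section Generic.
Variables (T I : Type) (F : I -> set T).

Definition invar (N : set I) (B : set T) :=
  forall x y, (forall i, N i -> (F i x <-> F i y)) -> B x -> B y.

Definition Tsig (G : set I) : set (set T) :=
  [set E | exists N B, [/\ countable N, N `<=` G, invar N B &
     countable ((E `\` B) `|` (B `\` E))]].

Lemma countable_sub {U} {A B : set U} : A `<=` B -> countable B -> countable A.
Proof. by move=> AB; apply: sub_countable; apply: subset_card_le. Qed.

Lemma Tsig_sigma G : sigma_algebra setT (Tsig G).
Proof.
split.
- exists set0, set0; split => //.
  by apply: (countable_sub _ (countable0 T)) => x [] [].
- move=> A [N [B [cN NG iB cD]]].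
  exists N, (~` B); split => //.
  + move=> x y Hxy nBx By; apply: nBx; apply: (iB y x) => // i Ni.
    by split => h; apply/(Hxy i Ni).
  + apply: (countable_sub _ cD) => x /=.
    by case: (pselect (A x)); case: (pselect (B x)); rewrite /setD /setU /setC /=; tauto.
- move=> A HA.
  have [f Hf] := choice HA.
  have [g Hg] := choice Hf.
  exists (\bigcup_n f n), (\bigcup_n g n); split.
  + by apply: bigcup_countable => // n _; case: (Hg n).
  + by move=> i [n _ Hn]; case: (Hg n) => _ + _ _; apply.
  + move=> x y Hxy [n _ Bx]; exists n => //; case: (Hg n) => _ _ iB _.
    by apply: (iB x) => // i Ni; apply: Hxy; exists n.
  + have cU : countable (\bigcup_n ((A n `\` g n) `|` (g n `\` A n))).
      by apply: bigcup_countable => // k _; case: (Hg k).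
    apply: (countable_sub _ cU).
      move=> x [[[n _ Anx] nB]|[[m _ Bnx] nA]].
        exists n => //; left; split => // Bx; apply: nB; by exists n.
      exists m => //; right; split => // Ax; apply: nA; by exists m.
Qed.

Lemma Tsig_countable G A : countable A -> Tsig G A.
Proof.
move=> cA; exists set0, set0; split => //.
apply: (countable_sub _ cA) => x [[]//|[]//].
Qed.

Lemma Tsig_gen G i : G i -> Tsig G (F i).
Proof.
move=> Gi; exists [set i], (F i); split.
- exact: countable1.
- by move=> j ->.
- by move=> x y H Fx; apply/(H i erefl).
- by apply: (countable_sub _ (countable0 T)) => x [[]|[]].
Qed.

Hypothesis KP : forall (N : set I) (b : I), countable N -> ~ N b ->
  forall C : set T, countable C -> exists y y',
    [/\ forall i, N i -> ~ F i y /\ ~ F i y', F b y, ~ F b y', ~ C y & ~ C y'].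

Lemma Tsig_not G b : ~ G b -> ~ Tsig G (F b).
Proof.
move=> nGb [N [B [cN NG iB cD]]].
have nNb : ~ N b by move=> /NG.
have [y [y' [Hp Fy nFy' nCy nCy']]] := KP N b cN nNb _ cD.
have [By'|nBy'] := pselect (B y').
  by apply: nCy'; right.
apply: nCy; left; split => // By; apply: nBy'; apply: (iB y) => // i Ni.
by have [h1 h2] := Hp i Ni; split.
Qed.

Lemma Tsig_inj : injective Tsig.
Proof.
move=> G1 G2 E; apply/funext => i; apply/propext; split => Gi.
  apply: contrapT => nG; apply: (@Tsig_not _ i nG); rewrite -E; exact: Tsig_gen.
apply: contrapT => nG; apply: (@Tsig_not _ i nG); rewrite E; exact: Tsig_gen.
Qed.

End Generic.

Local Open Scope ring_scope.
Lemma R_uncountable (R : realType) : ~ countable [set: R].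
Proof.
move=> /countable_lebesgue_measure0.
have := lebesgue_measure_itv (Interval -oo%O +oo%O : interval R).
rewrite set_itvNyy /= => ->. by [].
Qed.

Definition pR (R : realType) : Type := R.
HB.instance Definition _ (R : realType) := Choice.on (pR R).
HB.instance Definition _ (R : realType) := isPointed.Build (pR R) (0%R : R).

Lemma setnat_inj (R : realType) : c_eq_two_pow_lt_c R ->
  exists g : set nat -> R, injective g.
Proof.
move=> H.
pose A := range (fun n : nat => (n%:R : R)).
have nA : ~ (A #= [set: R]).
  move=> /eq_countable E; apply: (@R_uncountable R); rewrite -E.
  apply: sub_countable (card_image_le _ _) _; exact: countableP.
have [h hinj] : exists f : set R -> pR R, {in [set B : set R | B `<=` A] &, injective f}.
  by apply/(@pcard_injP _ (pR R)); exact: H.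
exists (fun S => h ((fun n : nat => (n%:R : R)) @` S)).
move=> S1 S2 /hinj E.
have {}E : (fun n : nat => (n%:R : R)) @` S1 = (fun n : nat => (n%:R : R)) @` S2.
  by apply: E; rewrite inE => x [n _ <-]; exists n.
apply/funext => n; apply/propext; split => Sn.
  have : ((fun n : nat => (n%:R : R)) @` S2) n%:R by rewrite -E; exists n.
  by case=> m Sm /eqP; rewrite eqr_nat => /eqP <-.
have : ((fun n : nat => (n%:R : R)) @` S1) n%:R by rewrite E; exists n.
by case=> m Sm /eqP; rewrite eqr_nat => /eqP <-.
Qed.

Lemma pickle_inj (T : countType) : injective (@pickle T).
Proof. exact: pcan_inj (@pickleK_inv T). Qed.
Arguments pickle_inj {T}.

Definition codes (R : realType) (z : (nat -> R) * (nat -> bool)) : set nat :=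
  [set m | exists n (q : rat), m = pickle (inl (n, q) : (nat * rat + nat)%type) /\ ratr q < z.1 n]
  `|` [set m | exists n, m = pickle (inr n : (nat * rat + nat)%type) /\ z.2 n].

Arguments codes {R}.

Lemma codes_lt (R : realType) (z z' : (nat -> R) * (nat -> bool)) n :
  codes z = codes z' -> z.1 n < z'.1 n -> False.
Proof.
move=> E /rat_in_itvoo [q]; rewrite in_itv /= => /andP [lq qr].
have : codes z (pickle (inl (n, q) : (nat * rat + nat)%type)).
  by rewrite E; left; exists n, q.
case.
  move=> [n1 [q1 [/pickle_inj [<- <-] h]]].
  by move: (lt_trans lq h); rewrite ltxx.
by move=> [n1 [/pickle_inj]].
Qed.

Lemma codes_s (R : realType) (z z' : (nat -> R) * (nat -> bool)) n :
  codes z = codes z' -> z.2 n -> z'.2 n.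
Proof.
move=> E sn.
have : codes z' (pickle (inr n : (nat * rat + nat)%type)).
  by rewrite -E; right; exists n.
case; first by move=> [n1 [q1 [/pickle_inj]]].
by move=> [n1 [/pickle_inj [<-]]].
Qed.

Lemma codes_inj (R : realType) : injective (@codes R).
Proof.
move=> [a s] [a' s'] E.
congr pair; apply/funext => n.
  case: (ltgtP (a n) (a' n)) => // h.
    by case: (codes_lt _ _ _ _ E h).
  by case: (codes_lt _ _ _ _ (esym E) h).
have h1 := @codes_s _ _ _ n E; have h2 := @codes_s _ _ _ n (esym E).
move: h1 h2 => /=; case: (s n); case: (s' n) => //= h1 h2.
  by have := h1 isT.
by have := h2 isT.
Qed.

Lemma enc_exists (R : realType) : c_eq_two_pow_lt_c R ->
  exists enc : (nat -> R) * (nat -> bool) -> R, injective enc.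
Proof.
move=> /setnat_inj [g ginj]; exists (fun z => g (codes z)).
by move=> z z' /ginj /codes_inj.
Qed.

Definition Gs (R : realType) (Y : set R) (z : (nat -> R) * (nat -> bool)) : Prop :=
  forall n, Y (z.1 n) <-> z.2 n.

Arguments Gs {R}.

Lemma KP_spec (R : realType) (enc : (nat -> R) * (nat -> bool) -> R) :
  injective enc ->
  forall (N : set (set R)) (b : set R), countable N -> ~ N b ->
  forall C : set R, countable C -> exists y y',
    [/\ forall i, N i -> ~ (enc @` Gs i) y /\ ~ (enc @` Gs i) y',
        (enc @` Gs b) y, ~ (enc @` Gs b) y', ~ C y & ~ C y'].
Proof.
move=> encinj N b cN nNb C cC.
have Fenc : forall Y z, (enc @` Gs Y) (enc z) <-> Gs Y z.
  move=> Y z; split; last by move=> h; exists z.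
  by case=> z' h /encinj <-.
have hp : forall Y, exists x, N Y -> ~ (Y x <-> b x).
  move=> Y; case: (pselect (N Y)) => NY; last by exists 0.
  case: (pselect (exists x, ~ (Y x <-> b x))) => [[x hx]|nx]; first by exists x.
  exfalso; apply: nNb; suff <- : Y = b by [].
  apply/funext => x; apply/propext; apply: contrapT => hx; apply: nx; by exists x.
have [p Hp] := choice hp.
have [fN fNinj] : exists f : set R -> nat, {in N &, injective f} by apply/countable_injP.
have he : forall k : nat, exists x : R, forall Y, N Y -> fN Y = k -> x = p Y.
  move=> k; case: (pselect (exists Y, N Y /\ fN Y = k)) => [[Y [NY fY]]|nY].
    exists (p Y) => Y' NY' fY'; congr p; apply: fNinj; rewrite ?inE //.
    by rewrite fY fY'.
  by exists 0 => Y NY fY; exfalso; apply: nY; exists Y.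
have [e He] := choice he.
have pe : forall Y, N Y -> e (fN Y) = p Y := fun Y NY => He _ Y NY erefl.
pose a r := fun n : nat => if n is k.+1 then e k else r.
pose s1 r := fun n : nat => `[< b (a r n) >].
pose s2 r := fun n : nat => if n is 0 then ~~ `[< b r >] else `[< b (a r n) >].
have G1 : forall r, Gs b (a r, s1 r).
  by move=> r n /=; split => [h|/asboolP //]; apply/asboolP.
have N1 : forall r Y, N Y -> ~ Gs Y (a r, s1 r).
  move=> r Y NY h; have := h (fN Y).+1; rewrite /= /s1 /= pe // => hY.
  apply: (Hp Y NY); split => [/hY/asboolP //|bp]; apply/hY; exact/asboolP.
have N2 : forall r, ~ Gs b (a r, s2 r).
  move=> r h; have := h 0%N; rewrite /= /s2 /=.
  case: (pselect (b r)) => br.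
    by have := asboolT br => -> /= [/(_ br)].
  by have := asboolF br => -> /= [_ /(_ isT)].
have N3 : forall r Y, N Y -> ~ Gs Y (a r, s2 r).
  move=> r Y NY h; have := h (fN Y).+1; rewrite /= /s2 /= pe // => hY.
  apply: (Hp Y NY); split => [/hY/asboolP //|bp]; apply/hY; exact/asboolP.
have [r [nC1 nC2]] : exists r, ~ C (enc (a r, s1 r)) /\ ~ C (enc (a r, s2 r)).
  apply: contrapT => nr; apply: (@R_uncountable R).
  have [gC gCinj] : exists f : R -> nat, {in C &, injective f} by apply/countable_injP.
  pose phi r := if `[< C (enc (a r, s1 r)) >] then enc (a r, s1 r) else enc (a r, s2 r).
  have Cphi : forall r, C (phi r).
    move=> r; rewrite /phi; case: (pselect (C (enc (a r, s1 r)))) => h.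
      by rewrite asboolT.
    rewrite asboolF //; apply: contrapT => h2; apply: nr; by exists r.
  have hphi : forall r, exists s, phi r = enc (a r, s).
    by move=> r; rewrite /phi; case: ifP => _; eexists.
  apply/countable_injP; exists (fun r => gC (phi r)) => r1 r2 _ _ /= E.
  have {}E : phi r1 = phi r2 by apply: gCinj; rewrite ?inE.
  have [t1 E1] := hphi r1; have [t2 E2] := hphi r2.
  move: E; rewrite E1 E2 => /encinj E.
  by have := congr1 (fun z => z.1 0%N) E.
exists (enc (a r, s1 r)), (enc (a r, s2 r)); split => //.
- by move=> Y NY; rewrite !Fenc; split; [exact: N1|exact: N3].
- by rewrite Fenc.
- by rewrite Fenc.
Qed.

Theorem theorem3p10 (R : realType) :
  c_eq_two_pow_lt_c R -> c_regular R ->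
  sigma_algebras_with_countables R #= @setT (set (set R)).
Proof.
move=> H1 _.
have [enc encinj] := @enc_exists R H1.
pose F := fun Y : set R => enc @` Gs Y.
have KP := @KP_spec R enc encinj.
apply: Cantor_Bernstein; first exact: card_leT.
have inj : {in [set: set (set R)] &, injective (Tsig _ _ F)}.
  by move=> x y _ _; apply: (@Tsig_inj R (set R) F KP).
have le1 : [set: set (set R)] #<= (Tsig _ _ F) @` [set: set (set R)].
  by have := card_esym (inj_card_eq inj); rewrite card_eq_le => /andP [].
apply: (card_le_trans le1); apply: subset_card_le.
move=> S [G _ <-]; split; first exact: (@Tsig_sigma R (set R) F G).
by move=> A cA; exact: (@Tsig_countable R (set R) F G A cA).
Qed.
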